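(* Let $(\lambda_k)_{k\in\mathbb{N}}$ be a decreasing sequence of positive numbers with $\lambda_k\to0$, and for each $k$ let $x^k$ be any stationary point of problem (P$_{\lambda_k}$). Then $(x^k)$ is bounded. Furthermore, suppose $\mathrm{int}\,D\cap\mathrm{int}\{x:Ax\in C\}\ne\emptyset$ and there exists $\hat x\in D$ with $A\hat x\in C$ such that $Q_{\lambda_k}(x^k)/\lambda_k\le\|\hat x\|_1/\|\hat x\|_2$ for all $k\in\mathbb{N}$. Then every accumulation point $x^\star$ of $(x^k)$ satisfies: (i) $x^\star\in D$ and $Ax^\star\in C$; (ii) $x^\star$ is a stationary point of problem (P).
   Context: Let $A\in\mathbb{R}^{m\times n}$, $b\in\mathbb{R}^m$, $\epsilon\ge0$ with $\|b\|_2>\epsilon$, $d>0$. $C:=\{y\in\mathbb{R}^m:\|y-b\|_2\le\epsilon\}$, $D:=\{x\in\mathbb{R}^n:\|x\|_2\le d\}$; $\iota_S$ is the indicator function of $S$. $\mathrm{env}(y):=\frac12((\|y-b\|_2-\epsilon)_+)^2$. $Q_\lambda(x):=(\lambda\|x\|_1+\mathrm{env}(Ax))/\|x\|_2$ on $D\setminus\{0_n\}$, $+\infty$ elsewhere. Problem (P): minimize $\|x\|_1/\|x\|_2$ subject to $\|Ax-b\|_2\le\epsilon$, $\|x\|_2\le d$, with extended objective $\Phi(x):=\|x\|_1/\|x\|_2+\iota_D(x)+\iota_C(Ax)$ for $x\ne0_n$, $\Phi(0_n)=+\infty$. Problem (P$_\lambda$): minimize $Q_\lambda$. Fréchet subdifferential: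 $\hat\partial\varphi(x):=\{v:\liminf_{z\to x,z\ne x}\frac{\varphi(z)-\varphi(x)-\langle v,z-x\rangle}{\|z-x\|_2}\ge0\}$ for $x\in\mathrm{dom}\,\varphi$. A stationary point of (P) (resp. (P$_\lambda$)) is an $x^\star$ with $0\in\hat\partial\Phi(x^\star)$ (resp. $0\in\hat\partial Q_\lambda(x^\star)$). *)

(* Defs.v *)
From mathcomp Require Import all_boot all_order all_algebra.
From mathcomp Require Import all_classical all_reals all_analysis.
Set Implicit Arguments. Unset Strict Implicit. Unset Printing Implicit Defensive.
Import Order.TTheory GRing.Theory Num.Theory.
Local Open Scope ring_scope.

Section Defs.
Context {R : realType}.

Definition dotv {n : nat} (u v : 'cV[R]_n) : R := \sum_(i < n) u i 0 * v i 0.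
Definition norm2 {n : nat} (x : 'cV[R]_n) : R := Num.sqrt (\sum_(i < n) x i 0 ^+ 2).
Definition norm1 {n : nat} (x : 'cV[R]_n) : R := \sum_(i < n) `|x i 0|.

Definition inC {m : nat} (b : 'cV[R]_m) (eps : R) (y : 'cV[R]_m) : Prop :=
  norm2 (y - b) <= eps.
Definition inD {n : nat} (d : R) (x : 'cV[R]_n) : Prop := norm2 x <= d.

Definition env {m : nat} (b : 'cV[R]_m) (eps : R) (y : 'cV[R]_m) : R :=
  2^-1 * (Num.max (norm2 (y - b) - eps) 0) ^+ 2.

Definition Qlam {m n : nat} (A : 'M[R]_(m, n)) (b : 'cV[R]_m) (eps d lam : R)
  (x : 'cV[R]_n) : \bar R :=
  if asbool (inD d x /\ x <> 0)
  then ((lam * norm1 x + env b eps (A *m x)) / norm2 x)%:E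
  else +oo%E.

Definition Phi {m n : nat} (A : 'M[R]_(m, n)) (b : 'cV[R]_m) (eps d : R)
  (x : 'cV[R]_n) : \bar R :=
  if asbool (x <> 0 /\ inD d x /\ inC b eps (A *m x))
  then (norm1 x / norm2 x)%:E
  else +oo%E.

(* The condition liminf_{z -> x, z <> x} (phi z - phi x - <v, z - x>)/||z - x|| >= 0
   is written out: for every e > 0 the quotient is eventually >= -e. *)
Definition frechet_subdiff {n : nat} (phi : 'cV[R]_n -> \bar R) (x v : 'cV[R]_n) : Prop :=
  phi x \is a fin_num /\
  forall e : R, 0 < e -> exists2 delta : R, 0 < delta &
    forall z : 'cV[R]_n, 0 < norm2 (z - x) < delta ->
      ((phi z - phi x - (dotv v (z - x))%:E) * (norm2 (z - x))^-1%:E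
         >= (- e)%:E)%E.

Definition stationary {n : nat} (phi : 'cV[R]_n -> \bar R) (x : 'cV[R]_n) : Prop :=
  frechet_subdiff phi x 0.

Definition interior_pt {n : nat} (S : 'cV[R]_n -> Prop) (x : 'cV[R]_n) : Prop :=
  exists2 r : R, 0 < r & forall z, norm2 (z - x) < r -> S z.

Definition accumulation_pt {n : nat} (xs : nat -> 'cV[R]_n) (p : 'cV[R]_n) : Prop :=
  forall e : R, 0 < e -> forall N : nat, exists2 k : nat, (N <= k)%N & norm2 (xs k - p) < e.

Definition bounded_seq {n : nat} (xs : nat -> 'cV[R]_n) : Prop :=
  exists M : R, forall k, norm2 (xs k) <= M.

End Defs.

(* Main.v *)
Require Import Defs.
From mathcomp Require Import all_boot all_order all_algebra.
From mathcomp Require Import all_classical all_reals all_analysis.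
From mathcomp Require Import ring lra.
Import Order.TTheory GRing.Theory Num.Theory.
Import numFieldTopology.Exports numFieldNormedType.Exports.
Local Open Scope classical_set_scope.
Local Open Scope ring_scope.

Section Basic.
Context {R : realType} {n : nat}.
Implicit Types (x y z : 'cV[R]_n).

Lemma CS_gen (f g : 'I_n -> R) :
  (\sum_i f i * g i) ^+ 2 <= (\sum_i f i ^+ 2) * (\sum_i g i ^+ 2).
Proof.
set P := \sum_i f i * g i; set F := \sum_i f i ^+ 2; set G := \sum_i g i ^+ 2.
have G0 : 0 <= G by apply: sumr_ge0 => i _; exact: sqr_ge0.
have F0 : 0 <= F by apply: sumr_ge0 => i _; exact: sqr_ge0.
have quad t : 0 <= F - 2 * t * P + t ^+ 2 * G.
  have -> : F - 2 * t * P + t ^+ 2 * G = \sum_i (f i - t * g i) ^+ 2.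
    rewrite /F /P /G mulr_sumr mulr_sumr -sumrN -!big_split /=.
    by apply: eq_bigr => i _; ring.
  by apply: sumr_ge0 => i _; exact: sqr_ge0.
have [G0'|Gp] := eqVneq G 0.
  have gi0 i : g i = 0.
    have /psumr_eq0P : \sum_i g i ^+ 2 = 0 by exact: G0'.
    move=> /(_ (fun i _ => sqr_ge0 (g i)) i isT) /eqP.
    by rewrite sqrf_eq0 => /eqP.
  have -> : P = 0 by rewrite /P big1 // => i _; rewrite gi0 mulr0.
  by rewrite expr0n /= mulr_ge0.
have Gpos : 0 < G by rewrite lt_def Gp G0.
have := quad (P / G).
have -> : F - 2 * (P / G) * P + (P / G) ^+ 2 * G = F - P ^+ 2 / G.
  by field; rewrite Gp.
rewrite subr_ge0 ler_pdivrMr //.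
Qed.

Lemma le_of_sq (a c : R) : 0 <= c -> a ^+ 2 <= c ^+ 2 -> a <= c.
Proof. move=> c0 h; rewrite -subr_ge0; nra. Qed.

Definition sumsq x := \sum_(i < n) x i 0 ^+ 2.
Lemma sumsq_ge0 x : 0 <= sumsq x.
Proof. by apply: sumr_ge0 => i _; exact: sqr_ge0. Qed.
Lemma norm2_ge0 x : 0 <= norm2 x.
Proof. exact: sqrtr_ge0. Qed.
Lemma norm2_sq x : norm2 x ^+ 2 = sumsq x.
Proof. by rewrite /norm2 sqr_sqrtr // sumsq_ge0. Qed.
Lemma sumsq_dot x : sumsq x = dotv x x.
Proof. by apply: eq_bigr => i _; rewrite expr2. Qed.

Lemma dotvC x y : dotv x y = dotv y x.
Proof. by apply: eq_bigr => i _; rewrite mulrC. Qed.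
Lemma dotvDl x y z : dotv (x + y) z = dotv x z + dotv y z.
Proof. by rewrite /dotv -big_split; apply: eq_bigr => i _; rewrite !mxE mulrDl. Qed.
Lemma dotvZl (t : R) x y : dotv (t *: x) y = t * dotv x y.
Proof. by rewrite /dotv mulr_sumr; apply: eq_bigr => i _; rewrite !mxE mulrA. Qed.
Lemma dotvNl x y : dotv (- x) y = - dotv x y.
Proof. by rewrite /dotv -sumrN; apply: eq_bigr => i _; rewrite !mxE mulNr. Qed.
Lemma dotvBl x y z : dotv (x - y) z = dotv x z - dotv y z.
Proof. by rewrite dotvDl dotvNl. Qed.
Lemma dotv0l y : dotv 0 y = 0.
Proof. by rewrite /dotv big1 // => i _; rewrite mxE mul0r. Qed.

Lemma CS x y : dotv x y ^+ 2 <= sumsq x * sumsq y.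
Proof. exact: (CS_gen (fun i => x i 0) (fun i => y i 0)). Qed.

Lemma CS_abs x y : `|dotv x y| <= norm2 x * norm2 y.
Proof.
apply: le_of_sq; first by rewrite mulr_ge0 ?norm2_ge0.
by rewrite real_normK ?num_real // exprMn !norm2_sq CS.
Qed.

Lemma CS_le x y : dotv x y <= norm2 x * norm2 y.
Proof. exact: le_trans (real_ler_norm (num_real _)) (CS_abs x y). Qed.

Lemma sumsqD x y : sumsq (x + y) = sumsq x + 2 * dotv x y + sumsq y.
Proof.
rewrite !sumsq_dot !dotvDl ![dotv _ (x + y)]dotvC !dotvDl (dotvC y x); ring.
Qed.
Lemma sumsqB x y : sumsq (x - y) = sumsq x - 2 * dotv x y + sumsq y.
Proof.
have dNr (u v : 'cV[R]_n) : dotv u (- v) = - dotv u v by rewrite dotvC dotvNl dotvC.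
have h1 := dNr x y.
have h2 : sumsq (- y) = sumsq y by rewrite !sumsq_dot dotvNl dNr opprK.
by rewrite sumsqD h1 h2 mulrN.
Qed.

Lemma sqrt_le_of_sq (a c : R) : 0 <= c -> a <= c ^+ 2 -> Num.sqrt a <= c.
Proof.
move=> c0 ac; have [a0|a0] := leP 0 a; last by rewrite (ler0_sqrtr (ltW a0)).
by apply: le_of_sq => //; rewrite sqr_sqrtr.
Qed.

Lemma norm2_triangle x y : norm2 (x + y) <= norm2 x + norm2 y.
Proof.
apply: sqrt_le_of_sq; first by rewrite addr_ge0 ?norm2_ge0.
change (sumsq (x + y) <= (norm2 x + norm2 y) ^+ 2); rewrite sumsqD -!norm2_sq.
have := CS_le x y; nra.
Qed.

Lemma norm2Z (t : R) x : norm2 (t *: x) = `|t| * norm2 x.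
Proof.
rewrite /norm2 -(sqrtr_sqr t) -sqrtrM ?sqr_ge0 //; congr Num.sqrt.
by rewrite mulr_sumr; apply: eq_bigr => i _; rewrite mxE exprMn.
Qed.

Lemma norm2N x : norm2 (- x) = norm2 x.
Proof. by rewrite -scaleN1r norm2Z normrN normr1 mul1r. Qed.

Lemma norm2_dist x y : norm2 (y - x) = norm2 (x - y).
Proof. by rewrite -norm2N opprB. Qed.

Lemma norm2_eq0 x : norm2 x = 0 -> x = 0.
Proof.
move=> /eqP; rewrite sqrtr_eq0 => h.
have h0 : sumsq x = 0 by apply/eqP; rewrite eq_le h sumsq_ge0.
apply/matrixP => i j; rewrite (ord1 j) mxE.
have := psumr_eq0P (fun i _ => sqr_ge0 (x i 0)) h0 (i:=i) isT.
by move/eqP; rewrite sqrf_eq0 => /eqP.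
Qed.

Lemma norm2_gt0 x : x <> 0 -> 0 < norm2 x.
Proof.
move=> xn0; rewrite lt_def norm2_ge0 andbT; apply/eqP => /norm2_eq0; exact: xn0.
Qed.

Lemma coord_le x i : `|x i 0| <= norm2 x.
Proof.
apply: le_of_sq; first exact: norm2_ge0.
rewrite real_normK ?num_real // norm2_sq /sumsq (bigD1 i) //= lerDl.
by apply: sumr_ge0 => j _; exact: sqr_ge0.
Qed.

Lemma norm1_ge0 x : 0 <= norm1 x.
Proof. by apply: sumr_ge0 => i _. Qed.

Lemma norm1_le x : norm1 x <= n%:R * norm2 x.
Proof.
rewrite /norm1 -[n in n%:R]card_ord -sum1_card natr_sum mulr_suml.
by apply: ler_sum => i _; rewrite mul1r coord_le.
Qed.

Lemma norm1_lip x y : `|norm1 y - norm1 x| <= n%:R * norm2 (y - x).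
Proof.
apply: le_trans _ (norm1_le _); rewrite /norm1 -sumrB.
apply: le_trans (ler_norm_sum _ _ _) _.
by apply: ler_sum => i _; rewrite !mxE ler_dist_dist.
Qed.

Lemma norm1_cvx (t : R) x y : 0 <= t <= 1 ->
  norm1 ((1 - t) *: x + t *: y) <= (1 - t) * norm1 x + t * norm1 y.
Proof.
move=> /andP[t0 t1]; rewrite /norm1 !mulr_sumr -big_split; apply: ler_sum => i _.
rewrite !mxE; apply: le_trans (ler_normD _ _) _.
have h1 : `|1 - t| = 1 - t by rewrite ger0_norm // subr_ge0.
by rewrite !normrM h1 (ger0_norm t0).
Qed.

Lemma norm2_cvx (t : R) x y : 0 <= t <= 1 ->
  norm2 ((1 - t) *: x + t *: y) <= (1 - t) * norm2 x + t * norm2 y.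
Proof.
move=> /andP[t0 t1]; apply: le_trans (norm2_triangle _ _) _.
have h1 : `|1 - t| = 1 - t by rewrite ger0_norm // subr_ge0.
by rewrite !norm2Z h1 (ger0_norm t0).
Qed.

End Basic.


Section S2.
Context {R : realType}.

Lemma mx_bound {m n : nat} (A : 'M[R]_(m, n)) :
  exists2 K : R, 0 <= K & forall v : 'cV[R]_n, norm2 (A *m v) <= K * norm2 v.
Proof.
set KK := \sum_(i < m) \sum_(j < n) A i j ^+ 2.
have KK0 : 0 <= KK by apply: sumr_ge0 => i _; apply: sumr_ge0 => j _; exact: sqr_ge0.
exists (Num.sqrt KK); first exact: sqrtr_ge0.
move=> v; apply: sqrt_le_of_sq; first by rewrite mulr_ge0 ?sqrtr_ge0 ?norm2_ge0.
rewrite exprMn sqr_sqrtr // norm2_sq /sumsq /KK mulr_suml.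
apply: ler_sum => i _; rewrite mxE.
exact: (CS_gen (fun j => A i j) (fun j => v j 0)).
Qed.

Lemma maxsq_cvx (a a1 a2 e t : R) : 0 <= t <= 1 -> a <= (1 - t) * a1 + t * a2 ->
  Num.max (a - e) 0 ^+ 2 <= (1 - t) * Num.max (a1 - e) 0 ^+ 2 + t * Num.max (a2 - e) 0 ^+ 2.
Proof.
move=> /andP[t0 t1] ha.
set p := Num.max (a1 - e) 0; set q := Num.max (a2 - e) 0; set r := Num.max (a - e) 0.
have p1 : a1 - e <= p by rewrite le_max lexx.
have p0 : 0 <= p by rewrite le_max lexx orbT.
have q1 : a2 - e <= q by rewrite le_max lexx.
have q0 : 0 <= q by rewrite le_max lexx orbT.
have r0 : 0 <= r by rewrite le_max lexx orbT.
have rs : r <= (1 - t) * p + t * q.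
  rewrite ge_max; apply/andP; split; last by rewrite addr_ge0 // mulr_ge0 // subr_ge0.
  have : (1 - t) * (a1 - e) <= (1 - t) * p by rewrite ler_wpM2l // subr_ge0.
  have : t * (a2 - e) <= t * q by rewrite ler_wpM2l.
  lra.
have h2 : r ^+ 2 <= ((1 - t) * p + t * q) ^+ 2.
  move: rs; set s := (1 - t) * p + t * q => rs; nra.
apply: le_trans h2 _.
have h : 0 <= t * (1 - t) * (p - q) ^+ 2.
  apply: mulr_ge0; last exact: sqr_ge0.
  by apply: mulr_ge0 => //; rewrite subr_ge0. rewrite -subr_ge0.
have -> : (1 - t) * p ^+ 2 + t * q ^+ 2 - ((1 - t) * p + t * q) ^+ 2 =
  t * (1 - t) * (p - q) ^+ 2 by ring.
exact: h.
Qed.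

Lemma env_ge0 {m} (b : 'cV[R]_m) eps y : 0 <= env b eps y.
Proof. by rewrite /env mulr_ge0 ?sqr_ge0 // invr_ge0. Qed.

Lemma env_cvx {m n} (A : 'M[R]_(m, n)) b eps (t : R) y z : 0 <= t <= 1 ->
  env b eps (A *m ((1 - t) *: y + t *: z)) <=
  (1 - t) * env b eps (A *m y) + t * env b eps (A *m z).
Proof.
move=> ht; rewrite /env.
have -> : A *m ((1 - t) *: y + t *: z) - b = (1 - t) *: (A *m y - b) + t *: (A *m z - b).
  rewrite mulmxDr -!scalemxAr !scalerBr; set u := A *m y; set v := A *m z.
  rewrite !scalerBl !scale1r opprB -!addrA; congr (_ + _); congr (_ + _).
  by rewrite addrCA [t *: b + _]addrC subrK addrC.
have h := maxsq_cvx _ _ _ eps _ ht (norm2_cvx t (A *m y - b) (A *m z - b) ht).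
have i0 : (0 : R) <= 2^-1 by rewrite invr_ge0.
move: h; set P := Num.max _ _ ^+ 2; set Q := Num.max _ _ ^+ 2; set S := Num.max _ _ ^+ 2.
move=> h; have := ler_wpM2l i0 h; lra.
Qed.

End S2.


Section S3.
Context {R : realType}.

Lemma stat_key {m n} (A : 'M[R]_(m, n)) b eps d lam (y : 'cV[R]_n) :
  0 <= lam -> stationary (Qlam A b eps d lam) y ->
  inD d y /\ y <> 0 /\
  forall z, inD d z ->
    ((lam * norm1 y + env b eps (A *m y)) / norm2 y) * dotv y z / norm2 y
      <= lam * norm1 z + env b eps (A *m z).
Proof.
move=> l0 [fin fr].
have [hD hy] : inD d y /\ y <> 0.
  by move: fin; rewrite /Qlam; case: asboolP.
split=> //; split=> //.
set Ny := norm2 y; have Ny0 : 0 < Ny by exact: norm2_gt0.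
set q := (lam * norm1 y + env b eps (A *m y)) / Ny.
have hq : lam * norm1 y + env b eps (A *m y) = q * Ny.
  by rewrite /q divfK // gt_eqF.
have q0 : 0 <= q.
  apply: divr_ge0; last exact: ltW.
  by rewrite addr_ge0 ?env_ge0 // mulr_ge0 // norm1_ge0.
have Qy : Qlam A b eps d lam y = q%:E by rewrite /Qlam asboolT.
have dyy : dotv y y = Ny ^+ 2 by rewrite norm2_sq sumsq_dot.
move=> z zD; rewrite leNgt; apply/negP => Lneg.
set Lz := lam * norm1 z + env b eps (A *m z) - q * dotv y z / Ny.
have Lz0 : Lz < 0 by rewrite /Lz subr_lt0.
have zy : z - y <> 0.
  move=> /eqP; rewrite subr_eq0 => /eqP zy; move: Lz0; rewrite /Lz zy dyy hq.
  have -> : q * Ny ^+ 2 / Ny = q * Ny by field; rewrite gt_eqF.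
  by rewrite subrr ltxx.
set r := norm2 (z - y); have r0 : 0 < r by exact: norm2_gt0.
set M := Ny + r; have M0 : 0 < M by rewrite addr_gt0.
set e := - Lz / (2 * M * r).
have e0 : 0 < e by rewrite divr_gt0 ?oppr_gt0 // !mulr_gt0.
have hE : e * (2 * M * r) = - Lz by rewrite /e divfK // gt_eqF // !mulr_gt0.
have [del del0 hdel] := fr e e0.
set t := Num.min (2^-1) (Num.min (del / (2 * r)) (Ny / (2 * r))).
have t0 : 0 < t by rewrite !lt_min invr_gt0 ltr0n !divr_gt0 // mulr_gt0.
have t1 : t <= 1.
  have : t <= 2^-1 by rewrite ge_min lexx.
  have : (2^-1 : R) <= 1 by rewrite invf_le1 ?ler1n ?ltr0n.
  lra.
have tdel : t * r < del.
  have : t <= del / (2 * r) by rewrite ge_min; apply/orP; right; rewrite ge_min lexx.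
  rewrite ler_pdivlMr ?mulr_gt0 // => h; nra.
have tNy : t * r < Ny.
  have : t <= Ny / (2 * r) by rewrite ge_min; apply/orP; right; rewrite ge_min lexx orbT.
  rewrite ler_pdivlMr ?mulr_gt0 // => h; nra.
have t01 : 0 <= t <= 1 by rewrite ltW.
set w := (1 - t) *: y + t *: z.
have wy : w - y = t *: (z - y).
  rewrite /w scalerBl scale1r scalerBr; set ty := t *: y; set tz := t *: z.
  by rewrite addrAC [y - ty - y]addrAC subrr add0r addrC.
have nwy : norm2 (w - y) = t * r by rewrite wy norm2Z ger0_norm // ltW.
have wD : inD d w.
  rewrite /inD; apply: le_trans (norm2_cvx t y z t01) _.
  move: hD zD; rewrite /inD => hD zD.
  have := ler_wpM2l (ltW t0) zD; have : 0 <= 1 - t by rewrite subr_ge0.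
  move=> h1t; have := ler_wpM2l h1t hD; lra.
have w0 : w <> 0.
  move=> hw; have h : norm2 (w - y) = Ny.
    by rewrite (congr1 (fun v => norm2 (v - y)) hw) /= sub0r norm2N.
  by move: tNy; rewrite -nwy h ltxx.
set W := norm2 w; have W0 : 0 < W by exact: norm2_gt0.
have WM : W <= M.
  have tri := norm2_triangle y (w - y); rewrite addrC subrK in tri.
  apply: le_trans tri _; rewrite nwy -/Ny /M lerD2l.
  by rewrite ger_pMl.
set Nw := lam * norm1 w + env b eps (A *m w).
have Qw : Qlam A b eps d lam w = (Nw / W)%:E by rewrite /Qlam asboolT.
have key := hdel w.
rewrite nwy mulr_gt0 //= tdel Qw Qy dotv0l -!EFinB -EFinM lee_fin in key.
have key' := key isT.
have Nwb : Nw <= t * Lz + q * W.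
  have h1 : Nw <= (1 - t) * (q * Ny) + t * (lam * norm1 z + env b eps (A *m z)).
    rewrite -hq /Nw.
    have := env_cvx A b eps t y z t01.
    have := ler_wpM2l l0 (norm1_cvx t y z t01).
    rewrite -/w; lra.
  have h2 : dotv y w = (1 - t) * Ny ^+ 2 + t * dotv y z.
    by rewrite dotvC dotvDl !dotvZl dyy (dotvC z y).
  have h3 : dotv y w <= Ny * W := CS_le y w.
  have h4 : q * dotv y w <= q * (Ny * W) := ler_wpM2l q0 h3.
  have h5 : q * dotv y w / Ny <= q * W.
    by rewrite ler_pdivrMr //; apply: le_trans h4 _; rewrite (mulrC Ny) mulrA.
  move: h5; rewrite h2 => h5.
  have -> : t * Lz = t * (lam * norm1 z + env b eps (A *m z)) - t * (q * dotv y z / Ny).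
    by rewrite /Lz mulrBr.
  have e1 : q * ((1 - t) * Ny ^+ 2 + t * dotv y z) / Ny =
            (1 - t) * (q * Ny) + t * (q * dotv y z / Ny) by field; rewrite gt_eqF.
  rewrite e1 in h5; lra.
move: key'; rewrite subr0 -[_ * (t * r)^-1]/(_ / (t * r)) ler_pdivlMr ?mulr_gt0 //.
move=> k1.
have k2 : (q - e * (t * r)) * W <= Nw.
  rewrite -ler_pdivlMr //; move: k1; lra.
have k3 : - (e * (t * r) * W) <= t * Lz by move: k2 Nwb; rewrite mulrBl; lra.
have k4 : - (e * r * W) <= Lz.
  by rewrite -(ler_pM2l t0) mulrN; move: k3; congr (_ <= _); ring.
have k5 : e * r * W <= e * r * M by rewrite ler_wpM2l // mulr_ge0 // ltW.
have : - Lz <= 2^-1 * - Lz.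
  rewrite -hE; have := k5; move: k4; lra.
move=> h; have : 0 < - Lz by rewrite oppr_gt0.
move: h; set u := - Lz; lra.
Qed.

End S3.


Section S4.
Context {R : realType}.

Lemma final_real (a r s N1z dxz rho e : R) : 0 < r -> 0 < s -> 0 <= a -> 0 < e ->
  0 < rho -> r <= s + rho -> rho <= r / 2 -> a * rho <= e * r ^+ 3 ->
  a * dxz <= N1z * r ^+ 2 -> rho ^+ 2 = s ^+ 2 - 2 * dxz + r ^+ 2 ->
  - e <= (N1z / s - a / r - 0) / rho.
Proof.
move=> r0 s0 a0 e0 p0 rs pr ap ad pe.
rewrite subr0 ler_pdivlMr //.
set Y := N1z / s - a / r.
have hN : N1z = (Y + a / r) * s by rewrite /Y subrK divfK // gt_eqF.
have r2s : r <= 2 * s by move: rs pr; lra.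
have f2 : 2 * dxz >= 2 * r * s - rho ^+ 2.
  have : 0 <= (s - r) ^+ 2 by exact: sqr_ge0.
  rewrite pe; move=> h; nra.
have g1 : (Y + a / r) * s * r ^+ 2 >= a * r * s - a * rho ^+ 2 / 2.
  rewrite -hN; apply: le_trans ad.
  have : a * (2 * dxz) >= a * (2 * r * s - rho ^+ 2) by rewrite ler_wpM2l.
  move=> h; have -> : a * dxz = a * (2 * dxz) / 2 by field.
  have -> : a * r * s - a * rho ^+ 2 / 2 = a * (2 * r * s - rho ^+ 2) / 2 by field.
  by rewrite ler_pdivrMr // divfK // ?pnatr_eq0.
have g2 : (Y + a / r) * s * r ^+ 2 = Y * s * r ^+ 2 + a * r * s.
  by field; rewrite gt_eqF.
have g3 : a * rho ^+ 2 / 2 <= e * r ^+ 2 * s * rho.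
  have : a * rho * rho <= e * r ^+ 3 * rho by rewrite ler_wpM2r // ltW.
  have : 0 <= e * r ^+ 2 * (2 * s - r) * rho.
    have : 0 <= 2 * s - r by rewrite subr_ge0.
    move=> h; apply: mulr_ge0; last exact: ltW.
    by apply: mulr_ge0 => //; apply: mulr_ge0; [exact: ltW | exact: sqr_ge0].
  move=> h1 h2; rewrite ler_pdivrMr //; nra.
have g4 : - (e * rho) * (s * r ^+ 2) <= Y * (s * r ^+ 2).
  move: g1 g3; rewrite g2; nra.
by rewrite -(ler_pM2r (_ : 0 < s * r ^+ 2)) ?mulr_gt0 ?exprn_gt0 // mulNr.
Qed.

End S4.


Section S5.
Context {R : realType}.

Lemma env0 {m} (b : 'cV[R]_m) eps y : inC b eps y -> env b eps y = 0.
Proof. by move=> h; rewrite /env max_r ?subr_le0 // expr0n /= mulr0. Qed.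

Lemma abs_prod (u v a c : R) : `|u| <= a -> `|v| <= c -> - (a * c) <= u * v.
Proof.
move=> hu hv; have : `|u * v| <= a * c by rewrite normrM ler_pM.
have := ler_norm (- (u * v)); rewrite normrN; lra.
Qed.

Lemma pt_ineq {m n} (A : 'M[R]_(m, n)) b eps d lam (y z : 'cV[R]_n) :
  0 < lam -> y <> 0 ->
  (forall z, inD d z ->
    ((lam * norm1 y + env b eps (A *m y)) / norm2 y) * dotv y z / norm2 y
      <= lam * norm1 z + env b eps (A *m z)) ->
  inD d z -> inC b eps (A *m z) ->
  norm1 y * dotv y z <= norm1 z * sumsq y.
Proof.
move=> l0 y0 H zD zC; have := H z zD; rewrite (env0 _ _ _ zC) addr0.
set Ny := norm2 y; have Ny0 : 0 < Ny by exact: norm2_gt0.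
have Sy : sumsq y = Ny ^+ 2 by rewrite norm2_sq.
set D := dotv y z; set v := env b eps (A *m y).
have v0 : 0 <= v by exact: env_ge0.
have [D0|D0] := leP D 0.
  move=> _; apply: le_trans (_ : 0 <= _); last by rewrite mulr_ge0 ?norm1_ge0 ?sumsq_ge0.
  by rewrite mulr_ge0_le0 ?norm1_ge0.
have -> : (lam * norm1 y + v) / Ny * D / Ny = (lam * norm1 y + v) * D / Ny ^+ 2.
  by field; rewrite gt_eqF.
rewrite ler_pdivrMr ?exprn_gt0 // => h.
have h2 : lam * (norm1 y * D) <= lam * (norm1 z * sumsq y).
  rewrite Sy mulrA mulrA; apply: le_trans h.
  by rewrite (ler_wpM2r (ltW D0)) // lerDl.
by rewrite ler_pM2l in h2.
Qed.

Definition Kc {n} (x z : 'cV[R]_n) : R :=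
  n%:R * (norm2 x + 1) * norm2 z + norm1 x * norm2 z + norm1 z * (2 * norm2 x + 1).

Lemma Kc_ge0 {n} (x z : 'cV[R]_n) : 0 <= Kc x z.
Proof.
have h1 := norm2_ge0 x; have h2 := norm2_ge0 z; have h3 := norm1_ge0 x.
have h4 := norm1_ge0 z; have h5 : (0 : R) <= n%:R by exact: ler0n.
rewrite /Kc; apply: addr_ge0; first apply: addr_ge0.
- by apply: mulr_ge0 => //; apply: mulr_ge0 => //; apply: addr_ge0.
- exact: mulr_ge0.
- by apply: mulr_ge0 => //; apply: addr_ge0 => //; apply: mulr_ge0.
Qed.

Lemma perturb {n} (x y z : 'cV[R]_n) (t : R) : norm2 (y - x) <= t -> t <= 1 ->
  norm1 x * dotv x z - norm1 z * sumsq x <=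
  norm1 y * dotv y z - norm1 z * sumsq y + t * Kc x z.
Proof.
move=> hd t1; set dl := y - x.
have t0 : 0 <= t := le_trans (norm2_ge0 _) hd.
have hy : y = x + dl by rewrite /dl addrC subrK.
have a1 : sumsq y <= sumsq x + t * (2 * norm2 x + 1).
  rewrite hy sumsqD.
  have c1 : dotv x dl <= norm2 x * t.
    apply: le_trans (CS_le _ _) _; rewrite ler_wpM2l ?norm2_ge0 //.
  have c2 : sumsq dl <= t.
    rewrite -norm2_sq; have := norm2_ge0 dl; move: hd; nra.
  lra.
have a2 : norm1 z * sumsq y <= norm1 z * sumsq x + norm1 z * (t * (2 * norm2 x + 1)).
  by rewrite -mulrDr ler_wpM2l ?norm1_ge0.
have hyz : dotv y z = dotv x z + dotv dl z by rewrite hy dotvDl.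
have ny : norm2 y <= norm2 x + 1.
  rewrite hy; apply: le_trans (norm2_triangle _ _) _; rewrite lerD2l; lra.
have b1 : - (n%:R * t * ((norm2 x + 1) * norm2 z)) <= (norm1 y - norm1 x) * dotv y z.
  apply: abs_prod.
    apply: le_trans (norm1_lip _ _) _; rewrite ler_wpM2l ?ler0n //.
  apply: le_trans (CS_abs _ _) _; rewrite ler_wpM2r ?norm2_ge0 //.
have b2 : - (norm1 x * (t * norm2 z)) <= norm1 x * dotv dl z.
  apply: abs_prod; first by rewrite ger0_norm ?norm1_ge0.
  apply: le_trans (CS_abs _ _) _; rewrite ler_wpM2r ?norm2_ge0 //.
have e1 : norm1 y * dotv y z = norm1 x * dotv x z + (norm1 y - norm1 x) * dotv y z +
   norm1 x * dotv dl z by rewrite hyz; ring.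
rewrite e1 /Kc; move: a2 b1 b2; lra.
Qed.

End S5.


Lemma lam_small (R : realType) (lam : nat -> R) : lam @ \oo --> (0 : R) ->
  forall eta : R, 0 < eta -> exists N, forall k, (N <= k)%N -> lam k <= eta.
Proof.
move=> /cvgrPdist_lt h eta eta0; have [N _ hN] := h eta eta0.
exists N => k kN; have := hN k kN; rewrite /= sub0r normrN => hk.
exact: le_trans (ler_norm _) (ltW hk).
Qed.

Theorem mainTheorem5 (R : realType) (m n : nat) (A : 'M[R]_(m, n)) (b : 'cV[R]_m)
  (eps d : R) (lam : nat -> R) (xs : nat -> 'cV[R]_n) :
  0 <= eps -> eps < norm2 b -> 0 < d ->
  (forall k, 0 < lam k) -> (forall k, lam k.+1 <= lam k) ->
  lam @ \oo --> (0 : R) ->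
  (forall k, stationary (Qlam A b eps d (lam k)) (xs k)) ->
  bounded_seq xs /\
  ((exists x0 : 'cV[R]_n,
       interior_pt (fun x => inD d x) x0 /\
       interior_pt (fun x => inC b eps (A *m x)) x0) ->
   (exists2 xhat : 'cV[R]_n, inD d xhat /\ inC b eps (A *m xhat) &
       forall k, (Qlam A b eps d (lam k) (xs k) / (lam k)%:E
                  <= (norm1 xhat / norm2 xhat)%:E)%E) ->
   forall xstar : 'cV[R]_n, accumulation_pt xs xstar ->
     (inD d xstar /\ inC b eps (A *m xstar)) /\
     stationary (Phi A b eps d) xstar).
Proof.
move=> eps0 epsb d0 lam0 _ lamcvg stat.
have SK k := stat_key A b eps d (lam k) (xs k) (ltW (lam0 k)) (stat k).
split.
  by exists d => k; case: (SK k).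
move=> _ [xhat [xhD xhC] hxhat] xstar acc.
set c := norm1 xhat / norm2 xhat.
have c0 : 0 <= c by rewrite divr_ge0 ?norm1_ge0 ?norm2_ge0.
have envb k : env b eps (A *m xs k) <= c * lam k * d.
  case: (SK k) => [hD [hy _]].
  have := hxhat k; rewrite /Qlam asboolT //.
  rewrite inver gt_eqF // -EFinM lee_fin.
  have Ny0 := norm2_gt0 _ hy; have l0 := lam0 k.
  rewrite ler_pdivrMr // ler_pdivrMr // => h.
  have h1 : env b eps (A *m xs k) <= lam k * norm1 (xs k) + env b eps (A *m xs k).
    by rewrite lerDr mulr_ge0 ?norm1_ge0 ?ltW.
  apply: le_trans h1 _; apply: le_trans h _.
  rewrite ler_wpM2l // mulr_ge0 // ltW //.
have xsD : inD d xstar.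
  apply/ler_addgt0Pr => e e0; have [k _ hk] := acc e e0 0%N.
  have := norm2_triangle (xs k) (xstar - xs k); rewrite addrC subrK.
  rewrite norm2_dist; case: (SK k) => [hD _]; move: hD hk; rewrite /inD; lra.
have xsC : inC b eps (A *m xstar).
  have [KA KA0 hKA] := mx_bound A.
  apply/ler_addgt0Pr => e e0.
  set eta := e / 2; have eta0 : 0 < eta by rewrite divr_gt0.
  have cd0 : 0 < 2 * c * d + 1.
    have : 0 <= 2 * c * d by apply: mulr_ge0; [exact: mulr_ge0 | exact: ltW].
    lra.
  have [N hN] := lam_small _ _ lamcvg _ (divr_gt0 (exprn_gt0 2 eta0) cd0).
  have KA1 : 0 < 2 * (KA + 1) by rewrite mulr_gt0 // ltr_pwDr.
  have [k kN hk] := acc (e / (2 * (KA + 1))) (divr_gt0 e0 KA1) N.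
  have lk := hN k kN.
  set mk := Num.max (norm2 (A *m xs k - b) - eps) 0.
  have mk1 : norm2 (A *m xs k - b) - eps <= mk by rewrite le_max lexx.
  have emk : env b eps (A *m xs k) = 2^-1 * mk ^+ 2 by [].
  have mkle : mk <= eta.
    apply: le_of_sq; first exact: ltW.
    have h1 := envb k; rewrite emk in h1.
    have h2 : c * lam k * d <= c * (eta ^+ 2 / (2 * c * d + 1)) * d.
      by apply: ler_wpM2r; [exact: ltW | exact: ler_wpM2l].
    have h3 : c * (eta ^+ 2 / (2 * c * d + 1)) * d * 2 <= eta ^+ 2.
      set X := eta ^+ 2 / (2 * c * d + 1).
      have hX : X * (2 * c * d + 1) = eta ^+ 2 by rewrite /X divfK // gt_eqF.
      have X0 : 0 <= X by rewrite /X divr_ge0 ?sqr_ge0 // ltW.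
      rewrite -hX; nra.
    lra.
  have : A *m xstar - b = (A *m xs k - b) + A *m (xstar - xs k).
    by rewrite mulmxBr [RHS]addrC addrA subrK.
  move=> ->; apply: le_trans (norm2_triangle _ _) _.
  have h4 := hKA (xstar - xs k); rewrite norm2_dist in h4.
  have h5 : KA * norm2 (xs k - xstar) <= e / 2.
    have : KA * norm2 (xs k - xstar) <= KA * (e / (2 * (KA + 1))).
      by rewrite ler_wpM2l // ltW.
    move=> h; apply: le_trans h _.
    have KA1' : 0 < KA + 1 by rewrite ltr_pwDr.
    rewrite (_ : KA * (e / (2 * (KA + 1))) = (e / 2) * (KA / (KA + 1))); last first.
      by field; rewrite gt_eqF.
    apply: ler_piMr; first by apply: divr_ge0 => //; exact: ltW.
    rewrite ler_pdivrMr // mul1r; lra.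
  rewrite /eta in mkle; lra.
have x0 : xstar <> 0.
  move=> h; move: xsC; rewrite /inC h mulmx0 sub0r norm2N; lra.
split; first by [].
have keyz z : inD d z -> inC b eps (A *m z) ->
    norm1 xstar * dotv xstar z <= norm1 z * sumsq xstar.
  move=> zD zC; rewrite -subr_le0; apply/ler_addgt0Pr => e e0; rewrite add0r.
  set K := Kc xstar z; have K0 : 0 <= K := Kc_ge0 _ _.
  set t := Num.min 1 (e / (K + 1)).
  have K1 : 0 < K + 1 by rewrite ltr_pwDr.
  have t0 : 0 < t by rewrite lt_min ltr01 divr_gt0.
  have t1 : t <= 1 by rewrite ge_min lexx.
  have tK : t * K <= e.
    have : t <= e / (K + 1) by rewrite ge_min lexx orbT.
    rewrite ler_pdivlMr // => h; nra.
  have [k _ hk] := acc t t0 0%N.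
  have := perturb _ _ z _ (ltW hk) t1.
  case: (SK k) => [_ [hy H]]; have := pt_ineq _ _ _ _ _ _ _ (lam0 k) hy H zD zC.
  rewrite -/K; lra.
set r := norm2 xstar; have r0 : 0 < r := norm2_gt0 _ x0.
set a := norm1 xstar; have a0 : 0 <= a := norm1_ge0 _.
have Phix : Phi A b eps d xstar = (a / r)%:E by rewrite /Phi asboolT.
split; first by rewrite Phix.
move=> e e0.
have a1 : 0 < a + 1 by rewrite ltr_pwDr.
exists (Num.min (r / 2) (e * r ^+ 3 / (a + 1))).
  by rewrite lt_min !divr_gt0 // mulr_gt0 // exprn_gt0.
move=> z /andP[rho0 rhod].
rewrite Phix dotv0l /Phi; case: asboolP => [[z0 [zD zC]]|_]; last first.
  have -> : (+oo - (a / r)%:E - 0%:E = +oo :> \bar R)%E by [].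
  by rewrite mulyr gtr0_sg ?invr_gt0 // mul1e leey.
rewrite -!EFinB -EFinM lee_fin.
set rho := norm2 (z - xstar).
apply: (@final_real R a r (norm2 z) (norm1 z) (dotv xstar z)) => //.
- exact: norm2_gt0.
- have := norm2_triangle z (xstar - z); rewrite addrC subrK norm2_dist //.
- by apply: le_trans (ltW rhod) _; rewrite ge_min lexx.
- have : rho <= e * r ^+ 3 / (a + 1).
    by apply: le_trans (ltW rhod) _; rewrite ge_min lexx orbT.
  rewrite ler_pdivlMr // => h; move: h rho0; rewrite -/rho; lra.
- by rewrite /r norm2_sq; exact: keyz.
- rewrite /rho norm2_sq sumsqB !norm2_sq dotvC; ring.
Qed.
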